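(* Let $G$ be a finite graph with maximum degree $\Delta$ and average degree $d\geq \Delta^{3/4}$. Then $G$ contains a $C_4$-free subgraph with average degree at least $d\cdot \Delta^{-3/4}/4$.
   Context: Average degree of $G$ is $2e(G)/|V(G)|$. A graph is $C_4$-free if it contains no $4$-cycle as a subgraph. *)

(* Defs.v *)
From mathcomp Require Import all_boot all_order all_algebra.
From mathcomp Require Import reals exp.
Set Implicit Arguments. Unset Strict Implicit. Unset Printing Implicit Defensive.
Import Order.TTheory GRing.Theory Num.Theory.

(* A finite simple graph is a symmetric irreflexive relation e on a finType T. *)

Definition deg (T : finType) (e : rel T) (v : T) : nat := #|[set u | e v u]|.

Definition maxdeg (T : finType) (e : rel T) : nat := \max_(v : T) deg e v.

(* number of ordered adjacent pairs inside A, i.e. 2 * (number of edges of e inside A) *)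
Definition two_edges (T : finType) (A : {set T}) (e : rel T) : nat :=
  #|[set p : T * T | [&& p.1 \in A, p.2 \in A & e p.1 p.2]]|.

Definition avg_deg (R : realType) (T : finType) (A : {set T}) (e : rel T) : R :=
  ((two_edges A e)%:R / (#|A|)%:R)%R.

Definition is_subgraph (T : finType) (e : rel T) (A : {set T}) (e' : rel T) : Prop :=
  symmetric e' /\ (forall x y, e' x y -> [&& e x y, x \in A & y \in A]).

Definition C4_free (T : finType) (e : rel T) : Prop :=
  forall a b c d : T, uniq [:: a; b; c; d] ->
    ~~ [&& e a b, e b c, e c d & e d a].

(* Main.v *)
Require Import Defs.
From mathcomp Require Import all_boot all_order all_algebra.
From mathcomp Require Import reals exp.
From mathcomp Require Import zify ring lra.
From Stdlib Require Import Classical.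
Import Order.TTheory GRing.Theory Num.Theory.
Set Implicit Arguments. Unset Strict Implicit.

Lemma card_sumb (T : finType) (P : pred T) :
  #|[set x | P x]| = \sum_x (P x : nat).
Proof. by rewrite -sum1dep_card big_mkcond; apply: eq_bigr => x _; case: (P x). Qed.

Lemma two_edgesT (T : finType) (r : rel T) :
  two_edges [set: T] r = \sum_u \sum_v (r u v : nat).
Proof.
rewrite /two_edges card_sumb pair_bigA; apply: eq_bigr => p _.
by rewrite !inE.
Qed.

Definition sdeg (T : finType) (F : {set T * T}) (x : T) : nat :=
  \sum_y ((x, y) \in F : nat).

Definition goodF (T : finType) (e : rel T) (k : nat) (F : {set T * T}) : Prop :=
  [/\ forall x y, (x, y) \in F -> (y, x) \in F,
      forall x y, (x, y) \in F -> e x y,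
      C4_free (fun x y => (x, y) \in F) &
      forall x, sdeg F x <= k].

Definition extendable (T : finType) (e : rel T) (k : nat) (F : {set T * T}) (u v : T) : Prop :=
  [/\ e u v, sdeg F u < k, sdeg F v < k &
      forall a b, (u, a) \in F -> (a, b) \in F -> (b, v) \in F -> False].

Lemma good0 (T : finType) (e : rel T) k : goodF e k set0.
Proof.
split; first by move=> x y; rewrite inE.
- by move=> x y; rewrite inE.
- by move=> a b c d _; rewrite !inE.
by move=> x; rewrite /sdeg big1 // => y _; rewrite inE.
Qed.

Lemma ext_notin (T : finType) (e : rel T) k F u v :
  goodF e k F -> extendable e k F u v -> (u, v) \notin F.
Proof.
case=> Fs _ _ _ [_ _ _ Hp]; apply/negP => Huv.
exact: (Hp v u Huv (Fs _ _ Huv) Huv).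
Qed.

Lemma ext_good (T : finType) (e : rel T) k F u v :
  symmetric e -> irreflexive e ->
  goodF e k F -> extendable e k F u v -> goodF e k (F :|: [set (u, v); (v, u)]).
Proof.
move=> es ei G X; case: (G) => Fs Fe Fc Fd; case: X => euv du dv Hp.
have Huv : u != v by apply/eqP => Euv; move: euv; rewrite Euv ei.
have Hp' : forall a b, (v, a) \in F -> (a, b) \in F -> (b, u) \in F -> False.
  by move=> a b h1 h2 h3; apply: (Hp b a (Fs _ _ h3) (Fs _ _ h2) (Fs _ _ h1)).
have inF' : forall x y, ((x, y) \in F :|: [set (u, v); (v, u)]) =
   [|| (x, y) \in F, (x == u) && (y == v) | (x == v) && (y == u)].
  by move=> x y; rewrite !inE !xpair_eqE.
split.
- move=> x y; rewrite !inF' => /or3P[/Fs -> //|/andP[/eqP-> /eqP->]|/andP[/eqP-> /eqP->]];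
  by rewrite !eqxx ?orbT.
- move=> x y; rewrite inF' => /or3P[/Fe //|/andP[/eqP-> /eqP->] //|/andP[/eqP-> /eqP->]].
  by rewrite es.
- move=> a b c d Hu; apply/negP; rewrite !inF' => /and4P[].
  move=> /or3P[h1|/andP[/eqP ? /eqP ?]|/andP[/eqP ? /eqP ?]];
  move=> /or3P[h2|/andP[/eqP ? /eqP ?]|/andP[/eqP ? /eqP ?]];
  move=> /or3P[h3|/andP[/eqP ? /eqP ?]|/andP[/eqP ? /eqP ?]];
  move=> /or3P[h4|/andP[/eqP ? /eqP ?]|/andP[/eqP ? /eqP ?]]; subst;
  first [ by move/negP: (Fc _ _ _ _ Hu); apply; rewrite h1 h2 h3 h4
        | by move: Hu; rewrite /= !inE ?eqxx ?orbT ?andbF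
        | by rewrite eqxx in Huv
        | by eauto
        | idtac ].
- move=> x; rewrite /sdeg.
  have one : forall w : T, \sum_y ((y == w) : nat) = 1.
    move=> w; rewrite (bigD1 w) //= eqxx big1 // => y /negbTE -> //.
  apply: leq_trans (_ : _ <= \sum_y (((x, y) \in F : nat) + ((x == u) && (y == v)) + ((x == v) && (y == u)))) _.
    apply: leq_sum => y _; rewrite inF'.
    by case: ((x, y) \in F); case: ((x == u) && (y == v)); case: ((x == v) && (y == u)).
  rewrite !big_split /=.
  case: (eqVneq x u) => [->|xu].
    rewrite (negbTE Huv) /= one big1_eq addn0 addn1; exact: du.
  case: (eqVneq x v) => [->|xv].
    rewrite /= one big1_eq addn0 addn1; exact: dv.
  rewrite !big1_eq !addn0; exact: Fd.
Qed.


Lemma exists_max (T : finType) (e : rel T) k :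
  symmetric e -> irreflexive e ->
  exists F, goodF e k F /\ forall u v, ~ extendable e k F u v.
Proof.
move=> es ei.
suff H : forall n F, goodF e k F -> #|{: T * T}| - #|F| <= n ->
  exists G, goodF e k G /\ forall u v, ~ extendable e k G u v.
  exact: (H _ set0 (good0 e k) (leqnn _)).
have step : forall F u v, goodF e k F -> extendable e k F u v ->
    #|F| < #|F :|: [set (u, v); (v, u)]| /\ #|F :|: [set (u, v); (v, u)]| <= #|{: T * T}|.
  move=> F u v G X; split; last exact: max_card.
  apply: proper_card; rewrite properE subsetUl /=.
  apply/negP => /subsetP S.
  have H : (u, v) \in F by apply: S; rewrite !inE eqxx /= orbT.
  by move: (ext_notin G X); rewrite H.
elim=> [|n IH] F G Hn;
  (case: (classic (exists u v, extendable e k F u v)) => [[u [v X]]|N];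
   last by exists F; split => // u v X; apply: N; exists u, v).
- have := step F u v G X; lia.
- apply: (IH (F :|: [set (u, v); (v, u)])); first exact: ext_good.
  have := step F u v G X; lia.
Qed.

Lemma deg_le (T : finType) (e : rel T) u : \sum_v (e u v : nat) <= maxdeg e.
Proof.
rewrite -(@card_sumb _ (fun v => e u v)); exact: (leq_bigmax (F := fun v => deg e v) u).
Qed.

Lemma pointwise (T : finType) (e : rel T) k F u v :
  goodF e k F -> ~ extendable e k F u v ->
  (e u v : nat) <= (k <= sdeg F u) * e u v + (k <= sdeg F v) * e u v +
     \sum_a \sum_b (((u, a) \in F) * ((a, b) \in F) * ((b, v) \in F)).
Proof.
move=> G N; case Huv: (e u v); last by [].
case: (leqP k (sdeg F u)) => hu.
  by apply: leq_trans (leq_addr _ _); apply: leq_trans (leq_addr _ _).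
case: (leqP k (sdeg F v)) => hv.
  by apply: leq_trans (leq_addr _ _); apply: leq_trans (leq_addl _ _).
case: (classic (exists a b, [&& (u, a) \in F, (a, b) \in F & (b, v) \in F])).
  move=> [a [b /and3P[h1 h2 h3]]].
  apply: leq_trans _ (leq_addl _ _).
  rewrite (bigD1 a) //= (bigD1 b) //= h1 h2 h3.
  by rewrite -addnA leq_addr.
move=> NP; exfalso; apply: N; split => // a b h1 h2 h3; apply: NP.
by exists a, b; rewrite h1 h2 h3.
Qed.

Lemma reorder4 (T : finType) (g : T -> T -> T -> T -> nat) :
  \sum_u \sum_v \sum_a \sum_b g u v a b = \sum_a \sum_b \sum_u \sum_v g u v a b.
Proof.
rewrite (eq_bigr (fun u => \sum_a \sum_v \sum_b g u v a b)); last first.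
  by move=> u _; rewrite exchange_big.
rewrite (eq_bigr (fun u => \sum_a \sum_b \sum_v g u v a b)); last first.
  by move=> u _; apply: eq_bigr => a _; rewrite exchange_big.
rewrite exchange_big; apply: eq_bigr => a _; rewrite exchange_big.
done.
Qed.

Lemma count_main (T : finType) (e : rel T) k F :
  symmetric e -> goodF e k F -> (forall u v, ~ extendable e k F u v) ->
  k * (\sum_u \sum_v (e u v : nat)) <= (\sum_u sdeg F u) * (2 * maxdeg e + k ^ 3).
Proof.
move=> es G N; case: (G) => Fs _ _ Fd.
set D := maxdeg e; set MF := \sum_u sdeg F u.
set A := \sum_u (k <= sdeg F u) * D.
set X1 := \sum_u (k <= sdeg F u) * \sum_v (e u v : nat).
set X2 := \sum_u \sum_v (k <= sdeg F v) * (e u v : nat).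
set X3 := \sum_u \sum_v \sum_a \sum_b (((u, a) \in F) * ((a, b) \in F) * ((b, v) \in F)).
have s1 : \sum_u \sum_v (e u v : nat) <= X1 + X2 + X3.
  rewrite /X1 /X2 /X3 -!big_split /=; apply: leq_sum => u _.
  rewrite big_distrr -!big_split /=; apply: leq_sum => v _.
  exact: pointwise.
have s2 : X1 <= A.
  by apply: leq_sum => u _; apply: leq_mul => //; exact: deg_le.
have s3 : X2 <= A.
  rewrite /X2 exchange_big; apply: leq_sum => v _; rewrite -big_distrr.
  apply: leq_mul => //; rewrite (eq_bigr (fun u => (e v u : nat))).
    exact: deg_le.
  by move=> u _; rewrite es.
have s4 : k * A <= MF * D.
  rewrite /A big_distrr /MF big_distrl; apply: leq_sum => u _.
  rewrite /= mulnA leq_mul2r; apply/orP; right.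
  by case: (leqP k (sdeg F u)) => h; rewrite ?muln1 ?muln0.
have s5 : X3 <= MF * (k * k).
  rewrite /X3 reorder4 /MF big_distrl; apply: leq_sum => a _.
  rewrite /sdeg big_distrl; apply: leq_sum => b _.
  rewrite (eq_bigr (fun u => ((u, a) \in F : nat) * ((a, b) \in F) * \sum_v ((b, v) \in F : nat))); last first.
    by move=> u _; rewrite big_distrr.
  rewrite -big_distrl -big_distrl /=.
  have h1 : \sum_u ((u, a) \in F : nat) <= k.
    apply: leq_trans (Fd a); rewrite /sdeg; apply: eq_leq; apply: eq_bigr => u _.
    by apply/eqP; rewrite eqn_leq; case h: ((u, a) \in F); case h': ((a, u) \in F) => //;
      [ rewrite (Fs _ _ h) in h' | rewrite (Fs _ _ h') in h ].
  have h2 := Fd b; rewrite /sdeg in h2.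
  apply: leq_trans (leq_mul (leq_mul h1 (leqnn _)) h2) _.
  by rewrite [k * _]mulnC -mulnA.
have t1 : k * X1 <= k * A by rewrite leq_mul2l s2 orbT.
have t2 : k * X2 <= k * A by rewrite leq_mul2l s3 orbT.
have t3 : k * X3 <= k * (MF * (k * k)) by rewrite leq_mul2l s5 orbT.
have t0 : k * (\sum_u \sum_v (e u v : nat)) <= k * (X1 + X2 + X3) by rewrite leq_mul2l s1 orbT.
rewrite !mulnDr in t0.
have -> : MF * (2 * D + k ^ 3) = 2 * (MF * D) + k * (MF * (k * k)).
  by rewrite mulnDr; congr (_ + _); [rewrite mulnCA | rewrite !expnS expn0 muln1; lia].
lia.
Qed.

Unset Implicit Arguments.

Lemma small_k (D : nat) : 0 < D -> D < 27 ->
  exists k, 0 < k /\ (2 * D + k ^ 3) ^ 4 <= 256 * k ^ 4 * D ^ 3.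
Proof.
move=> h0 h1.
case: (leqP D 7) => h2.
  exists 1; split => //.
  do 8 (case: D h0 h1 h2 => [|D] h0 h1 h2; first by lia).
  lia.
exists 2; split => //.
do 27 (case: D h0 h1 h2 => [|D] h0 h1 h2; first by lia).
lia.
Qed.

Lemma big_k (D : nat) : 27 <= D ->
  exists k, 0 < k /\ (2 * D + k ^ 3) ^ 4 <= 256 * k ^ 4 * D ^ 3.
Proof.
move=> hD.
have ex : exists k, k ^ 3 <= D by exists 0; rewrite exp0n.
have ub : forall k, k ^ 3 <= D -> k <= D.
  move=> k hk; case: k hk => // k hk; apply: leq_trans hk.
  by rewrite expnS leq_pmulr // expn_gt0.
case: (ex_maxnP ex ub) => k hk hmax.
have k3 : 3 <= k by apply: hmax; apply: leq_trans hD; done.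
have hlt : D < (k + 1) ^ 3.
  rewrite ltnNge; apply/negP => h; have := hmax _ h; lia.
have k4 : D <= k ^ 4.
  apply: ltnW; apply: (leq_trans hlt).
  have -> : k ^ 4 = k * k * k * k by rewrite !expnS expn0; lia.
  have -> : (k + 1) ^ 3 = (k + 1) * (k + 1) * (k + 1) by rewrite !expnS expn0; lia.
  nia.
have X : 2 * D + k ^ 3 <= 4 * D by lia.
exists k; split; first lia.
apply: leq_trans (_ : (4 * D) ^ 4 <= _).
  by rewrite leq_exp2r.
have -> : (4 * D) ^ 4 = 256 * D * D ^ 3 by rewrite expnMn (expnS D 3) mulnA.
by apply: leq_mul => //; apply: leq_mul.
Qed.

Local Open Scope ring_scope.

Lemma real_step (R : realType) (k M MF D : nat) :
  (0 < k)%N -> (0 < D)%N -> (k * M <= MF * (2 * D + k ^ 3))%N ->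
  ((2 * D + k ^ 3) ^ 4 <= 256 * k ^ 4 * D ^ 3)%N ->
  (M%:R : R) * (D%:R `^ (- (3 / 4))) / 4 <= MF%:R.
Proof.
move=> k0 D0 h1 h2.
set p := (D%:R : R) `^ (3 / 4).
have Dp : (0 : R) < D%:R by rewrite ltr0n.
have pp : 0 < p by apply: powR_gt0.
have p4 : p ^+ 4 = (D%:R : R) ^+ 3.
  rewrite /p -powR_mulrn; last exact: powR_ge0.
  rewrite -powRrM -powR_mulrn; last exact: ltW.
  congr (_ `^ _); by rewrite mulfVK // pnatr_eq0.
have X4 : (((2 * D + k ^ 3)%N)%:R : R) <= 4 * k%:R * p.
  rewrite -(@ler_pXn2r _ 4) //; first last.
  - by rewrite nnegrE; apply: mulr_ge0; [apply: mulr_ge0 | apply: ltW].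
  - by rewrite nnegrE.
  rewrite !exprMn p4 -!natrX -!natrM ler_nat.
  exact: h2.
have km : (k%:R : R) * M%:R <= MF%:R * (4 * k%:R * p).
  apply: (@le_trans _ _ (MF%:R * ((2 * D + k ^ 3)%N)%:R)).
    by rewrite -!natrM ler_nat.
  by apply: ler_wpM2l.
rewrite powRN -/p.
have k0' : (0 : R) < k%:R by rewrite ltr0n.
rewrite -mulrA -invfM ler_pdivrMr; last by apply: mulr_gt0.
rewrite -(ler_pM2l k0'); apply: le_trans km _.
rewrite le_eqVlt; apply/orP; left; apply/eqP; ring.
Qed.

Theorem lemma10 (R : realType) (T : finType) (e : rel T) :
  symmetric e -> irreflexive e -> (0 < #|T|)%N ->
  ((maxdeg e)%:R : R) `^ (3 / 4) <= avg_deg R [set: T] e ->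
  exists (A : {set T}) (e' : rel T),
    [/\ A != set0, is_subgraph e A e', C4_free e' &
        avg_deg R [set: T] e * ((maxdeg e)%:R : R) `^ (- (3 / 4)) / 4
          <= avg_deg R A e'].
Proof.
move=> es ei n0 _.
have [k [k0 hk]] : exists k, (0 < k)%N /\
    (maxdeg e = 0%N \/ ((2 * maxdeg e + k ^ 3) ^ 4 <= 256 * k ^ 4 * maxdeg e ^ 3)%N).
  case: (posnP (maxdeg e)) => D0; first by exists 1%N; split => //; left.
  case: (ltnP (maxdeg e) 27) => D27.
    by have [k [? ?]] := @small_k _ D0 D27; exists k; split => //; right.
  by have [k [? ?]] := @big_k _ D27; exists k; split => //; right.
have [F [G N]] := exists_max k es ei.
case: (G) => Fs Fe Fc Fd.
exists [set: T], (fun x y => (x, y) \in F); split => //.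
- by case/card_gt0P: n0 => x _; apply/set0Pn; exists x; rewrite inE.
- split; first by move=> x y; apply/idP/idP; apply: Fs.
  by move=> x y h; rewrite !inE Fe.
rewrite /avg_deg !two_edgesT cardsT.
have np : (0 : R) < #|T|%:R by rewrite ltr0n.
have -> : forall a b : R, a / #|T|%:R * b / 4 = (a * b / 4) / #|T|%:R.
  by move=> a b; ring.
apply: ler_wpM2r; first by rewrite invr_ge0 ltW.
case: hk => [D0|hk].
  rewrite D0 powR0; first by rewrite mulr0 mul0r.
  by rewrite oppr_eq0 mulf_eq0 negb_or !pnatr_eq0 // invr_eq0 pnatr_eq0.
case: (posnP (maxdeg e)) => D0.
  rewrite D0 powR0; first by rewrite mulr0 mul0r.
  by rewrite oppr_eq0 mulf_eq0 negb_or !pnatr_eq0 // invr_eq0 pnatr_eq0.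
exact: (@real_step R _ _ _ _ k0 D0 (count_main es G N) hk).
Qed.
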